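(* Let $X,Y$ be countable discrete metric spaces, $d\in D(X,Y)$, $d'\in D(Y,X)$ with $M_{d\circ d'}(Y,Y)=M_{d^0}(Y,Y)$ and $M_{d'\circ d}(X,X)=M_{d^0}(X,X)$. Then $X$ and $Y$ are almost isometric: there exist almost isometries $f:X\to Y$, $g:Y\to X$ and $C>0$ with $d_X(g(f(x)),x)<C$ and $d_Y(f(g(y)),y)<C$ for all $x\in X$, $y\in Y$.
   Context: $D(X,Y)$: metrics on $X\sqcup Y$ extending $d_X,d_Y$. Composites: $(d'\circ d)(x_1,x_2')=\inf_{y\in Y}(d(x_1,y)+d'(y,x_2'))$ on $X\sqcup X'$ ($X'$ a copy of $X$), similarly $(d\circ d')(y_1,y_2')=\inf_{x\in X}(d'(y_1,x)+d(x,y_2'))$. For such a function $\rho$ on $X\sqcup X'$, $M_\rho(X,X)$ is the norm closure of bounded operators $T$ on $l^2(X)$ for which there is $L$ with $\langle T\delta_{x_1},\delta_{x_2}\rangle=0$ whenever $\rho(x_1,x_2')\ge L$. $d^0(x_1,x_2')=d_X(x_1,x_2)+1$, so $M_{d^0}(X,X)=C^*_u(X)$. An almost isometry $f:X\to Y$ satisfies $d_X(x,x')-C\le d_Y(f(x),f(x'))\le d_X(x,x')+C$ for some $C>0$. *)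

(* Defs.v *)
From Stdlib Require Import Reals List.
Open Scope R_scope.

Definition C : Type := (R * R)%type.
Definition C0 : C := (0, 0).
Definition Cplus (a b : C) : C := (fst a + fst b, snd a + snd b).
Definition Csub (a b : C) : C := (fst a - fst b, snd a - snd b).
Definition Cmult (a b : C) : C :=
  (fst a * fst b - snd a * snd b, fst a * snd b + snd a * fst b).
Definition Cconj (a : C) : C := (fst a, - snd a).
Definition Cmod (a : C) : R := sqrt (fst a ^ 2 + snd a ^ 2).

Definition Csum {A : Type} (s : list A) (f : A -> C) : C :=
  fold_right (fun a acc => Cplus (f a) acc) C0 s.
Definition Rsum {A : Type} (s : list A) (f : A -> R) : R :=
  fold_right (fun a acc => f a + acc) 0 s.

Definition is_metric {T : Type} (d : T -> T -> R) : Prop :=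
  (forall x y, 0 <= d x y) /\
  (forall x y, d x y = 0 <-> x = y) /\
  (forall x y, d x y = d y x) /\
  (forall x y z, d x z <= d x y + d y z).

Definition countable (T : Type) : Prop :=
  exists f : T -> nat, forall x y, f x = f y -> x = y.

Definition discrete_metric {T : Type} (d : T -> T -> R) : Prop :=
  forall x, exists r, 0 < r /\ forall y, d x y < r -> y = x.

(* D(X,Y): metrics on X ⊔ Y (= sum type X + Y) extending dX and dY *)
Definition in_D {X Y : Type} (dX : X -> X -> R) (dY : Y -> Y -> R)
  (d : X + Y -> X + Y -> R) : Prop :=
  is_metric d /\
  (forall x x', d (inl x) (inl x') = dX x x') /\
  (forall y y', d (inr y) (inr y') = dY y y').

(* Bounded operators on l^2(X) represented by their matrices:
   T x1 x2 = <T δ_{x1}, δ_{x2}>. Boundedness / norm estimates are tested on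
   finitely supported vectors (dense in l^2(X)). *)
Definition opmat (X : Type) : Type := X -> X -> C.

Definition finvec {X : Type} (s : list X) (v : X -> C) : Prop :=
  NoDup s /\ forall x, ~ In x s -> v x = C0.

Definition vnorm {X : Type} (s : list X) (v : X -> C) : R :=
  sqrt (Rsum s (fun x => Cmod (v x) ^ 2)).

(* <T v, u> for finitely supported v (support in s) and u (support in t) *)
Definition bform {X : Type} (T : opmat X) (s : list X) (v : X -> C)
  (t : list X) (u : X -> C) : C :=
  Csum s (fun x1 => Csum t (fun x2 =>
    Cmult (Cmult (T x1 x2) (v x1)) (Cconj (u x2)))).

Definition op_norm_le {X : Type} (T : opmat X) (eps : R) : Prop :=
  forall s v t u, finvec s v -> finvec t u ->
    Cmod (bform T s v t u) <= eps * vnorm s v * vnorm t u.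

Definition bounded_op {X : Type} (T : opmat X) : Prop :=
  exists K, op_norm_le T K.

Definition op_sub {X : Type} (T S : opmat X) : opmat X :=
  fun x1 x2 => Csub (T x1 x2) (S x1 x2).

(* A function rho on X ⊔ X' is encoded by the predicate
   rho_ge x1 x2 L  :<->  rho(x1, x2') >= L
   (this allows rho to be an infimum, possibly over an empty set). *)
Definition finite_prop {X : Type} (rho_ge : X -> X -> R -> Prop)
  (T : opmat X) : Prop :=
  exists L, forall x1 x2, rho_ge x1 x2 L -> T x1 x2 = C0.

(* M_rho(X,X): norm closure of bounded operators of finite rho-propagation *)
Definition M_rho {X : Type} (rho_ge : X -> X -> R -> Prop) (T : opmat X) : Prop :=
  bounded_op T /\
  forall eps, 0 < eps -> exists S,
    bounded_op S /\ finite_prop rho_ge S /\ op_norm_le (op_sub T S) eps.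

(* (d' ∘ d)(x1,x2') = inf_y (d(x1,y) + d'(y,x2')) >= L *)
Definition comp_XX {X Y : Type} (d : X + Y -> X + Y -> R) (d' : Y + X -> Y + X -> R)
  : X -> X -> R -> Prop :=
  fun x1 x2 L => forall y : Y, d (inl x1) (inr y) + d' (inl y) (inr x2) >= L.

(* (d ∘ d')(y1,y2') = inf_x (d'(y1,x) + d(x,y2')) >= L *)
Definition comp_YY {X Y : Type} (d : X + Y -> X + Y -> R) (d' : Y + X -> Y + X -> R)
  : Y -> Y -> R -> Prop :=
  fun y1 y2 L => forall x : X, d' (inl y1) (inr x) + d (inl x) (inr y2) >= L.

(* d^0(x1,x2') = d_X(x1,x2) + 1 >= L *)
Definition d0_ge {X : Type} (dX : X -> X -> R) : X -> X -> R -> Prop :=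
  fun x1 x2 L => dX x1 x2 + 1 >= L.

Definition almost_isometry {X Y : Type} (dX : X -> X -> R) (dY : Y -> Y -> R)
  (f : X -> Y) : Prop :=
  exists C, 0 < C /\ forall x x',
    dX x x' - C <= dY (f x) (f x') /\ dY (f x) (f x') <= dX x x' + C.

(* Main.v *)
Require Import Defs.
From Stdlib Require Import Reals List.
From Stdlib Require Import Lra ClassicalEpsilon Classical.
Require Coquelicot.Complex.
Open Scope R_scope.

Lemma Cmod_triangle' (a b : Defs.C) : Cmod (Cplus a b) <= Cmod a + Cmod b.
Proof. exact (Coquelicot.Complex.Cmod_triangle a b). Qed.
Lemma Cmod_mult' (a b : Defs.C) : Cmod (Cmult a b) = Cmod a * Cmod b.
Proof. exact (Coquelicot.Complex.Cmod_mult a b). Qed.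
Lemma Cmod_conj' (a : Defs.C) : Cmod (Cconj a) = Cmod a.
Proof. exact (Coquelicot.Complex.Cmod_conj a). Qed.
Lemma Cmod_ge0 (a : Defs.C) : 0 <= Cmod a.
Proof. unfold Cmod; apply sqrt_pos. Qed.
Lemma Cmod_C0 : Cmod C0 = 0.
Proof. unfold Cmod, C0; simpl. replace (0*(0*1)+0*(0*1)) with 0 by ring. apply sqrt_0. Qed.
Lemma Cmod_one : Cmod (1,0) = 1.
Proof. unfold Cmod; simpl. replace (1*(1*1)+0*(0*1)) with 1 by ring. apply sqrt_1. Qed.

Section Sums.
Context {A : Type}.

Lemma Rsum_cons (a : A) s f : Rsum (a :: s) f = f a + Rsum s f.
Proof. reflexivity. Qed.
Lemma Rsum_nil f : Rsum (@nil A) f = 0.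
Proof. reflexivity. Qed.

Lemma Rsum_le (s : list A) f g : (forall x, f x <= g x) -> Rsum s f <= Rsum s g.
Proof. intros H; induction s; rewrite ?Rsum_nil, ?Rsum_cons; [lra|]. specialize (H a); lra. Qed.

Lemma Rsum_ext (s : list A) f g : (forall x, f x = g x) -> Rsum s f = Rsum s g.
Proof. intros H; induction s; rewrite ?Rsum_nil, ?Rsum_cons; [lra|]. rewrite H, IHs; lra. Qed.

Lemma Rsum_plus (s : list A) f g : Rsum s (fun x => f x + g x) = Rsum s f + Rsum s g.
Proof. induction s; rewrite ?Rsum_nil, ?Rsum_cons; [lra|]. rewrite IHs; lra. Qed.

Lemma Rsum_scal (s : list A) c f : Rsum s (fun x => c * f x) = c * Rsum s f.
Proof. induction s; rewrite ?Rsum_nil, ?Rsum_cons; [lra|]. rewrite IHs; lra. Qed.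

Lemma Rsum_nonneg (s : list A) f : (forall x, 0 <= f x) -> 0 <= Rsum s f.
Proof. intros H; induction s; rewrite ?Rsum_nil, ?Rsum_cons; [lra|]. specialize (H a); lra. Qed.

Lemma Csum_bound (s : list A) f : Cmod (Csum s f) <= Rsum s (fun x => Cmod (f x)).
Proof.
  induction s; simpl Csum; rewrite ?Rsum_nil, ?Rsum_cons.
  - rewrite Cmod_C0; lra.
  - eapply Rle_trans; [apply Cmod_triangle'|]. lra.
Qed.

Definition dl (a b : A) : R := if excluded_middle_informative (a = b) then 1 else 0.

Lemma dl_sym a b : dl a b = dl b a.
Proof. unfold dl; destruct excluded_middle_informative, excluded_middle_informative; subst; congruence. Qed.
Lemma dl_ge0 a b : 0 <= dl a b.
Proof. unfold dl; destruct excluded_middle_informative; lra. Qed.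

Lemma Rsum_dl0 a (t : list A) : ~ In a t -> Rsum t (fun b => dl a b) = 0.
Proof.
  induction t; intros H; rewrite ?Rsum_nil, ?Rsum_cons; [lra|].
  rewrite IHt by (intro; apply H; right; auto).
  unfold dl; destruct excluded_middle_informative; [subst; exfalso; apply H; left; auto| lra].
Qed.

Lemma Rsum_dl a (t : list A) : NoDup t -> Rsum t (fun b => dl a b) <= 1.
Proof.
  induction 1; rewrite ?Rsum_nil, ?Rsum_cons; [lra|].
  unfold dl at 1; destruct excluded_middle_informative.
  - subst. rewrite Rsum_dl0 by auto. lra.
  - lra.
Qed.

Lemma Rsum_swap (s t : list A) (F : A -> A -> R) :
  Rsum s (fun a => Rsum t (fun b => F a b)) = Rsum t (fun b => Rsum s (fun a => F a b)).
Proof.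
  induction s; rewrite ?Rsum_nil, ?Rsum_cons.
  - induction t; [reflexivity|]. rewrite Rsum_cons, <- IHt. unfold Rsum; simpl. ring.
  - rewrite IHs. rewrite <- Rsum_plus. apply Rsum_ext; intros; rewrite Rsum_cons; lra.
Qed.

Lemma bform_bound (T : opmat A) s v t u :
  Cmod (bform T s v t u) <=
  Rsum s (fun a => Rsum t (fun b => Cmod (T a b) * Cmod (v a) * Cmod (u b))).
Proof.
  unfold bform. eapply Rle_trans; [apply Csum_bound|].
  apply Rsum_le; intros a. eapply Rle_trans; [apply Csum_bound|].
  apply Rsum_le; intros b. rewrite !Cmod_mult', Cmod_conj'. lra.
Qed.

Definition Idm : opmat A := fun a b =>
  if excluded_middle_informative (a = b) then (1,0) else C0.

Lemma Cmod_Idm a b : Cmod (Idm a b) = dl a b.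
Proof. unfold Idm, dl; destruct excluded_middle_informative; [apply Cmod_one|apply Cmod_C0]. Qed.

End Sums.

Lemma cs_real (Q A B : R) : 0 <= A -> 0 <= B ->
  (forall l, 0 < l -> Q <= l * A / 2 + B / (2 * l)) -> Q <= sqrt A * sqrt B.
Proof.
  intros HA HB H.
  pose proof (sqrt_pos A) as Ha. pose proof (sqrt_pos B) as Hb.
  pose proof (sqrt_sqrt A HA) as EA. pose proof (sqrt_sqrt B HB) as EB.
  set (a := sqrt A) in *. set (b := sqrt B) in *.
  destruct (Rle_or_lt Q 0) as [HQ|HQ]. { nra. }
  destruct (Req_dec a 0) as [Ha0|Ha0].
  - specialize (H ((B + 1) / Q)). exfalso.
    assert (0 < (B+1)/Q) by (apply Rdiv_lt_0_compat; lra).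
    specialize (H H0).
    assert (HA0 : A = 0) by nra. rewrite HA0 in H.
    replace (B / (2 * ((B + 1) / Q))) with (B * Q / (2 * (B+1))) in H by (field; lra).
    assert (B * Q / (2 * (B+1)) <= Q / 2).
    { apply Rmult_le_reg_r with (2*(B+1)); [lra|].
      unfold Rdiv. rewrite Rmult_assoc, Rinv_l by lra. nra. }
    lra.
  - destruct (Req_dec b 0) as [Hb0|Hb0].
    + specialize (H (Q / (A + 1))). exfalso.
      assert (0 < Q/(A+1)) by (apply Rdiv_lt_0_compat; lra).
      specialize (H H0). assert (HB0 : B = 0) by nra. rewrite HB0 in H.
      replace (Q / (A + 1) * A / 2 + 0 / (2 * (Q / (A + 1)))) with (Q * A / (2*(A+1))) in H by (field; lra).
      assert (Q * A / (2 * (A+1)) <= Q / 2).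
      { apply Rmult_le_reg_r with (2*(A+1)); [lra|].
        unfold Rdiv. rewrite Rmult_assoc, Rinv_l by lra. nra. }
      lra.
    + specialize (H (b / a)).
      assert (0 < b / a) by (apply Rdiv_lt_0_compat; lra).
      specialize (H H0). rewrite <- EA, <- EB in H.
      replace (b / a * (a * a) / 2 + b * b / (2 * (b / a))) with (a * b) in H by (field; lra).
      lra.
Qed.

Lemma Idm_bounded {A : Type} : op_norm_le (@Idm A) 1.
Proof.
  intros s v t u [Hs _] [Ht _].
  eapply Rle_trans; [apply bform_bound|].
  unfold vnorm. rewrite Rmult_1_l.
  apply cs_real.
  - apply Rsum_nonneg; intros; apply pow2_ge_0.
  - apply Rsum_nonneg; intros; apply pow2_ge_0.
  - intros l Hl.
    eapply Rle_trans.
    { apply Rsum_le; intro a; apply Rsum_le; intro b.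
      rewrite Cmod_Idm.
      instantiate (1 := fun b => dl a b * (l / 2 * Cmod (v a) ^ 2) + dl a b * (/ (2 * l) * Cmod (u b) ^ 2)).
      simpl. rewrite <- Rmult_plus_distr_l, Rmult_assoc. apply Rmult_le_compat_l; [apply dl_ge0|].
      pose proof (Cmod_ge0 (v a)); pose proof (Cmod_ge0 (u b)).
      set (p := Cmod (v a)) in *. set (q := Cmod (u b)) in *.
      assert (0 <= (l * p - q)^2 / (2 * l)).
      { unfold Rdiv; apply Rmult_le_pos; [apply pow2_ge_0|left; apply Rinv_0_lt_compat; lra]. }
      assert (E : l / 2 * (p * (p * 1)) + / (2 * l) * (q * (q * 1)) = p * q + (l*p - q)^2/(2*l)) by (field; lra).
      lra. }
    erewrite Rsum_ext; [|intro a; apply Rsum_plus].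
    rewrite Rsum_plus.
    rewrite Rsum_swap with (F := fun a b => dl a b * (/ (2 * l) * Cmod (u b) ^ 2)).
    assert (E1 : Rsum s (fun a => Rsum t (fun b => dl a b * (l / 2 * Cmod (v a) ^ 2)))
                 <= l * Rsum s (fun x => Cmod (v x) ^ 2) / 2).
    { replace (l * Rsum s (fun x => Cmod (v x) ^ 2) / 2) with
        (Rsum s (fun x => l / 2 * Cmod (v x) ^ 2)) by (rewrite Rsum_scal; field).
      apply Rsum_le; intro a.
      erewrite Rsum_ext; [|intro b; rewrite Rmult_comm; reflexivity].
      rewrite Rsum_scal.
      assert (0 <= l / 2 * Cmod (v a) ^ 2) by (apply Rmult_le_pos; [lra|apply pow2_ge_0]).
      assert (H0 : Rsum t (dl a) <= 1) by exact (Rsum_dl a t Ht). nra. }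
    assert (E2 : Rsum t (fun b => Rsum s (fun a => dl a b * (/ (2 * l) * Cmod (u b) ^ 2)))
                 <= Rsum t (fun x => Cmod (u x) ^ 2) / (2 * l)).
    { replace (Rsum t (fun x => Cmod (u x) ^ 2) / (2 * l)) with
        (Rsum t (fun x => / (2 * l) * Cmod (u x) ^ 2)) by (rewrite Rsum_scal; field; lra).
      apply Rsum_le; intro b.
      erewrite Rsum_ext; [|intro a; rewrite Rmult_comm, dl_sym; reflexivity].
      rewrite Rsum_scal.
      assert (0 <= / (2 * l) * Cmod (u b) ^ 2).
      { apply Rmult_le_pos; [left; apply Rinv_0_lt_compat; lra|apply pow2_ge_0]. }
      assert (H0 : Rsum s (dl b) <= 1) by exact (Rsum_dl b s Hs). nra. }
    lra.
Qed.

Lemma Idm_in_M {A : Type} (dA : A -> A -> R) : is_metric dA -> M_rho (d0_ge dA) (@Idm A).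
Proof.
  intros [_ [Hz _]]. split.
  - exists 1; apply Idm_bounded.
  - intros eps Heps. exists Idm. split; [exists 1; apply Idm_bounded|]. split.
    + exists 2. intros a b Hg. unfold Idm, d0_ge in *.
      destruct excluded_middle_informative; auto. subst.
      assert (dA b b = 0) by (apply Hz; auto). lra.
    + intros s v t u _ _. eapply Rle_trans; [apply bform_bound|].
      rewrite (Rsum_ext s _ (fun _ => 0)).
      * rewrite Rsum_scal with (c := 0) (f := fun _ => 0) || idtac.
        assert (Rsum s (fun _ : A => 0) = 0) as ->.
        { induction s; rewrite ?Rsum_nil, ?Rsum_cons; lra. }
        unfold vnorm. pose proof (sqrt_pos (Rsum s (fun x => Cmod (v x) ^ 2))).
        pose proof (sqrt_pos (Rsum t (fun x => Cmod (u x) ^ 2))).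
        apply Rmult_le_pos; [apply Rmult_le_pos|]; lra.
      * intro a. induction t; rewrite ?Rsum_nil, ?Rsum_cons; [lra|].
        rewrite IHt. unfold op_sub, Csub, Cmod. simpl.
        replace ((fst (Idm a a0) - fst (Idm a a0)) * ((fst (Idm a a0) - fst (Idm a a0)) * 1) +
          (snd (Idm a a0) - snd (Idm a a0)) * ((snd (Idm a a0) - snd (Idm a a0)) * 1)) with 0 by ring.
        rewrite sqrt_0. ring.
Qed.

Lemma diag_le {A : Type} (T : opmat A) eps x : op_norm_le T eps -> Cmod (T x x) <= eps.
Proof.
  intros H.
  set (e := fun z : A => if excluded_middle_informative (z = x) then ((1,0) : Defs.C) else C0).
  assert (Hf : finvec (x :: nil) e).
  { split. constructor; [simpl; auto|constructor].
    intros z Hz. unfold e. destruct excluded_middle_informative; auto.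
    subst; exfalso; apply Hz; left; auto. }
  specialize (H _ _ _ _ Hf Hf).
  assert (ex : e x = (1,0)) by (unfold e; destruct excluded_middle_informative; congruence).
  assert (Hn : vnorm (x :: nil) e = 1).
  { unfold vnorm. rewrite Rsum_cons, Rsum_nil, ex, Cmod_one.
    replace (1 ^ 2 + 0) with 1 by ring. apply sqrt_1. }
  rewrite Hn in H.
  assert (bform T (x :: nil) e (x :: nil) e = T x x).
  { unfold bform, Csum. simpl. rewrite ex. destruct (T x x) as [p q].
    unfold Cplus, Cmult, Cconj, C0; simpl. f_equal; ring. }
  rewrite H0 in H. lra.
Qed.

Lemma key {A : Type} (dA : A -> A -> R) (rho : A -> A -> R -> Prop) :
  is_metric dA -> (forall T, M_rho rho T <-> M_rho (d0_ge dA) T) ->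
  exists L, forall x, ~ rho x x L.
Proof.
  intros Hm H. destruct (proj2 (H Idm) (Idm_in_M dA Hm)) as [_ H2].
  destruct (H2 (1/2)) as [S [_ [[L HL] Hn]]]; [lra|].
  exists L. intros x Hr. specialize (HL _ _ Hr).
  pose proof (diag_le _ _ x Hn) as Hd.
  unfold op_sub in Hd. rewrite HL in Hd. unfold Idm in Hd.
  destruct excluded_middle_informative as [_|n]; [|apply n; auto].
  unfold Csub, C0 in Hd. simpl in Hd.
  replace (1 - 0, 0 - 0) with ((1,0) : Defs.C) in Hd by (f_equal; ring).
  rewrite Cmod_one in Hd. lra.
Qed.

Theorem corollary4p3 (X Y : Type) (dX : X -> X -> R) (dY : Y -> Y -> R)
  (HmX : is_metric dX) (HmY : is_metric dY)
  (HcX : countable X) (HcY : countable Y)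
  (HdX : discrete_metric dX) (HdY : discrete_metric dY)
  (d : X + Y -> X + Y -> R) (d' : Y + X -> Y + X -> R)
  (Hd : in_D dX dY d) (Hd' : in_D dY dX d')
  (HY : forall T : opmat Y, M_rho (comp_YY d d') T <-> M_rho (d0_ge dY) T)
  (HX : forall T : opmat X, M_rho (comp_XX d d') T <-> M_rho (d0_ge dX) T) :
  exists (f : X -> Y) (g : Y -> X) (C : R),
    almost_isometry dX dY f /\ almost_isometry dY dX g /\ 0 < C /\
    (forall x, dX (g (f x)) x < C) /\ (forall y, dY (f (g y)) y < C).
Proof.
  destruct (key dX _ HmX HX) as [L1 H1].
  destruct (key dY _ HmY HY) as [L2 H2].
  assert (F : forall x, {y | d (inl x) (inr y) + d' (inl y) (inr x) < L1}).
  { intro x. apply constructive_indefinite_description.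
    specialize (H1 x). unfold comp_XX in H1.
    apply not_all_ex_not in H1. destruct H1 as [y Hy]. exists y. lra. }
  assert (G : forall y, {x | d' (inl y) (inr x) + d (inl x) (inr y) < L2}).
  { intro y. apply constructive_indefinite_description.
    specialize (H2 y). unfold comp_YY in H2.
    apply not_all_ex_not in H2. destruct H2 as [x Hx]. exists x. lra. }
  destruct Hd as [[dp [_ [ds dt]]] [dXe dYe]].
  destruct Hd' as [[dp' [_ [ds' dt']]] [dYe' dXe']].
  set (K1 := Rabs L1 + 1). set (K2 := Rabs L2 + 1).
  assert (L1 < K1) by (unfold K1; pose proof (Rle_abs L1); lra).
  assert (L2 < K2) by (unfold K2; pose proof (Rle_abs L2); lra).
  assert (0 < K1) by (unfold K1; pose proof (Rabs_pos L1); lra).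
  assert (0 < K2) by (unfold K2; pose proof (Rabs_pos L2); lra).
  set (f := fun x => proj1_sig (F x)). set (g := fun y => proj1_sig (G y)).
  assert (Hf : forall x, d (inl x) (inr (f x)) < K1 /\ d' (inl (f x)) (inr x) < K1).
  { intro x. unfold f. destruct (F x) as [y Hy]; simpl.
    pose proof (dp (inl x) (inr y)); pose proof (dp' (inl y) (inr x)). split; lra. }
  assert (Hg : forall y, d' (inl y) (inr (g y)) < K2 /\ d (inl (g y)) (inr y) < K2).
  { intro y. unfold g. destruct (G y) as [x Hx]; simpl.
    pose proof (dp (inl x) (inr y)); pose proof (dp' (inl y) (inr x)). split; lra. }
  exists f, g, (K1 + K2). repeat split.
  - exists (2 * K1). split; [lra|]. intros x x'. destruct (Hf x) as [a _]; destruct (Hf x') as [a' _].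
    rewrite <- dYe, <- dXe. split.
    + pose proof (dt (inl x) (inr (f x)) (inl x')).
      pose proof (dt (inr (f x)) (inr (f x')) (inl x')).
      pose proof (ds (inr (f x)) (inl x)); pose proof (ds (inr (f x')) (inl x')); lra.
    + pose proof (dt (inr (f x)) (inl x) (inr (f x'))).
      pose proof (dt (inl x) (inl x') (inr (f x'))).
      pose proof (ds (inr (f x)) (inl x)); pose proof (ds (inr (f x')) (inr (f x))); lra.
  - exists (2 * K2). split; [lra|]. intros y y'. destruct (Hg y) as [a _]; destruct (Hg y') as [a' _].
    rewrite <- dYe', <- dXe'. split.
    + pose proof (dt' (inl y) (inr (g y)) (inl y')).
      pose proof (dt' (inr (g y)) (inr (g y')) (inl y')).
      pose proof (ds' (inr (g y)) (inl y)); pose proof (ds' (inr (g y')) (inl y')); lra.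
    + pose proof (dt' (inr (g y)) (inl y) (inr (g y'))).
      pose proof (dt' (inl y) (inl y') (inr (g y'))).
      pose proof (ds' (inr (g y)) (inl y)); pose proof (ds' (inr (g y')) (inr (g y))); lra.
  - lra.
  - intro x. rewrite <- dXe'. destruct (Hf x) as [_ a]. destruct (Hg (f x)) as [b _].
    pose proof (dt' (inr (g (f x))) (inl (f x)) (inr x)).
    pose proof (ds' (inr (g (f x))) (inl (f x))); lra.
  - intro y. rewrite <- dYe. destruct (Hg y) as [_ a]. destruct (Hf (g y)) as [b _].
    pose proof (dt (inr (f (g y))) (inl (g y)) (inr y)).
    pose proof (ds (inr (f (g y))) (inl (g y))); lra.
Qed.
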